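(* Let $\gamma>0$, $b>0$, $c>0$, $u_{1max}>0$, $u_{2max}>0$, $i_0\in[0,1]$, and let $\beta$ be a bounded nonnegative (measurable) function of time. For a deadline $T>0$, consider minimizing $J(u_1,u_2)=-1+s(T)+\int_0^T (b u_1^2(t)+c u_2^2(t))\,dt$ over Lebesgue integrable $u_1,u_2$ with $0\le u_1(t)\le u_{1max}$, $0\le u_2(t)\le u_{2max}$, subject to $$\dot s = -(\beta+u_2)\, s(1-s-r) - u_1 s,\qquad \dot r=\gamma(1-s-r),\qquad s(0)=1-i_0,\ r(0)=0,\ 0\le s,r\le 1.$$ The optimality system (from Pontryagin's Maximum Principle) consists of these state equations together with the adjoint equations $$\dot\lambda_s = \beta\lambda_s - 2\beta\lambda_s s - \beta\lambda_s r + \lambda_s u_1 + \lambda_s u_2 - 2\lambda_s u_2 s - \lambda_s u_2 r + \gamma\lambda_r,$$ $$\dot\lambda_r = -\beta\lambda_s s + \lambda_s u_2 s + \gamma\lambda_r,$$ with $\lambda_s(T)=-1$, $\lambda_r(T)=0$, and the control characterizations $$u_1=\min\Big\{\max\Big\{\tfrac{\lambda_s s}{-2b},0\Big\},u_{1max}\Big\},\qquad u_2=\min\Big\{\max\Big\{\tfrac{\lambda_s s(1-2s-r)}{-2c},0\Big\},u_{2max}\Big\}$$ (all quantities evaluated at time $t$). Then for a sufficiently small campaign deadline $T$, the state and adjoint trajectories $(s,r,\lambda_s,\lambda_r)$ at the optimum (i.e. the solution of this optimality system) and the optimal controls $(u_1,u_2)$ are unique.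
   Context: Controlled SIR information epidemic: $s,r$ are the fractions of susceptible and recovered individuals (infected fraction $1-s-r$), $\beta(t)$ the effective spreading rate, $\gamma$ the recovery rate, $u_1$ the direct recruitment control, $u_2$ the word-of-mouth control, and $\lambda_s,\lambda_r$ the adjoint variables. *)

(* Defs.v *)
From mathcomp Require Import all_boot all_order all_algebra.
From mathcomp Require Import all_classical all_reals all_analysis.
Set Implicit Arguments. Unset Strict Implicit. Unset Printing Implicit Defensive.
Import Order.TTheory GRing.Theory Num.Theory.
Import numFieldNormedType.Exports.
Local Open Scope classical_set_scope.
Local Open Scope ring_scope.

Section SIR.
Variable R : realType.

Definition u1_char (b u1max ls s : R) : R :=
  Num.min (Num.max (ls * s / (- (2 * b))) 0) u1max.
Definition u2_char (c u2max ls s r : R) : R :=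
  Num.min (Num.max (ls * s * (1 - 2 * s - r) / (- (2 * c))) 0) u2max.

Definition rhs_s (beta u1 u2 s r : R) : R :=
  - (beta + u2) * s * (1 - s - r) - u1 * s.
Definition rhs_r (gamma s r : R) : R := gamma * (1 - s - r).
Definition rhs_ls (gamma beta u1 u2 s r ls lr : R) : R :=
  beta * ls - 2 * beta * ls * s - beta * ls * r + ls * u1 + ls * u2
  - 2 * ls * u2 * s - ls * u2 * r + gamma * lr.
Definition rhs_lr (gamma beta u2 s ls lr : R) : R :=
  - beta * ls * s + ls * u2 * s + gamma * lr.

(* Solutions are understood in the
   Caratheodory sense (integral equations with Lebesgue-integrable right-hand
   sides), as beta is only measurable. *)
Definition optimality_system (gamma b c u1max u2max i0 : R) (beta : R -> R)
    (T : R) (s r ls lr : R -> R) : Prop :=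
  let U1 := fun t => u1_char b u1max (ls t) (s t) in
  let U2 := fun t => u2_char c u2max (ls t) (s t) (r t) in
  let Fs := fun t => rhs_s (beta t) (U1 t) (U2 t) (s t) (r t) in
  let Fr := fun t => rhs_r gamma (s t) (r t) in
  let Fls := fun t => rhs_ls gamma (beta t) (U1 t) (U2 t) (s t) (r t) (ls t) (lr t) in
  let Flr := fun t => rhs_lr gamma (beta t) (U2 t) (s t) (ls t) (lr t) in
  [/\ (forall t, 0 <= t <= T -> 0 <= s t <= 1 /\ 0 <= r t <= 1),
      [/\ (lebesgue_measure.-integrable `[0, T] (fun t => (Fs t)%:E)),
      (lebesgue_measure.-integrable `[0, T] (fun t => (Fr t)%:E)),
      (lebesgue_measure.-integrable `[0, T] (fun t => (Fls t)%:E)) &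
      (lebesgue_measure.-integrable `[0, T] (fun t => (Flr t)%:E))] &
      forall t, 0 <= t <= T ->
        [/\ s t = (1 - i0) + \int[lebesgue_measure]_(x in `[0, t]) Fs x,
            r t = 0 + \int[lebesgue_measure]_(x in `[0, t]) Fr x,
            ls t = -1 - \int[lebesgue_measure]_(x in `[t, T]) Fls x &
            lr t = 0 - \int[lebesgue_measure]_(x in `[t, T]) Flr x]].

End SIR.

(* Main.v *)
Require Import Defs.
From mathcomp Require Import all_boot all_order all_algebra.
From mathcomp Require Import all_classical all_reals all_analysis.
From mathcomp Require Import measurable_realfun.
From mathcomp Require Import lra ring.
Set Implicit Arguments. Unset Strict Implicit. Unset Printing Implicit Defensive.
Import Order.TTheory GRing.Theory Num.Theory.
Import numFieldNormedType.Exports.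
Local Open Scope classical_set_scope.
Local Open Scope ring_scope.

Section Lip.
Variable R : realType.
Implicit Types C K d m x y : R.

Definition lip C K d (a1 a2 : R) := `|a1| <= C /\ `|a2| <= C /\ `|a1 - a2| <= K * d.

Lemma lip_cst d k : 0 <= d -> lip `|k| 0 d k k.
Proof. by move=> d0; rewrite /lip subrr normr0 mul0r. Qed.

Lemma lip_add C1 K1 C2 K2 d a1 a2 b1 b2 : lip C1 K1 d a1 a2 -> lip C2 K2 d b1 b2 ->
  lip (C1 + C2) (K1 + K2) d (a1 + b1) (a2 + b2).
Proof.
move=> [h1 [h2 h3]] [g1 [g2 g3]]; split; [|split].
- by apply: le_trans (ler_normD _ _) _; lra.
- by apply: le_trans (ler_normD _ _) _; lra.
- have -> : a1 + b1 - (a2 + b2) = (a1 - a2) + (b1 - b2) by ring.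
  by apply: le_trans (ler_normD _ _) _; lra.
Qed.

Lemma lip_opp C K d a1 a2 : lip C K d a1 a2 -> lip C K d (- a1) (- a2).
Proof.
move=> [h1 [h2 h3]]; split; [|split]; rewrite ?normrN //.
have -> : - a1 - - a2 = - (a1 - a2) by ring.
by rewrite normrN.
Qed.

Lemma lip_sub C1 K1 C2 K2 d a1 a2 b1 b2 : lip C1 K1 d a1 a2 -> lip C2 K2 d b1 b2 ->
  lip (C1 + C2) (K1 + K2) d (a1 - b1) (a2 - b2).
Proof. by move=> h g; apply: lip_add => //; apply: lip_opp. Qed.

Lemma lip_mul C1 K1 C2 K2 d a1 a2 b1 b2 : 0 <= d -> lip C1 K1 d a1 a2 -> lip C2 K2 d b1 b2 ->
  lip (C1 * C2) (C1 * K2 + K1 * C2) d (a1 * b1) (a2 * b2).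
Proof.
move=> d0 [h1 [h2 h3]] [g1 [g2 g3]].
have := normr_ge0 a1; have := normr_ge0 a2; have := normr_ge0 b1; have := normr_ge0 b2.
have := normr_ge0 (a1 - a2); have := normr_ge0 (b1 - b2) => *.
split; [|split]; rewrite ?normrM; first by nra.
  by nra.
have -> : a1 * b1 - a2 * b2 = a1 * (b1 - b2) + (a1 - a2) * b2 by ring.
apply: le_trans (ler_normD _ _) _; rewrite !normrM.
have: `|a1| * `|b1 - b2| <= C1 * (K2 * d) by apply: ler_pM.
have: `|a1 - a2| * `|b2| <= (K1 * d) * C2 by apply: ler_pM.
nra.
Qed.

Definition clamp (m x : R) := Num.min (Num.max x 0) m.

Lemma clampE m x : 0 < m -> clamp m x = if x <= 0 then 0 else if x <= m then x else m.
Proof.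
move=> m0; rewrite /clamp /Num.max /Num.min.
case: (ltrP x 0) => h1; case: (lerP x 0) => h2; try (exfalso; lra).
- by rewrite m0.
- have -> : x = 0 by lra.
  by rewrite m0.
- case: (ltrP x m) => h3; case: (lerP x m) => h4 //; try (exfalso; lra).
  by have -> : x = m by lra.
Qed.

Lemma clamp_lip m x y : 0 < m -> `|clamp m x - clamp m y| <= `|x - y|.
Proof.
move=> m0; rewrite !clampE //.
have [h|h] := lerP 0 (x - y); [rewrite (ger0_norm h)|rewrite (ltr0_norm h)];
rewrite ler_norml;
have [?|?] := lerP x 0; have [?|?] := lerP y 0;
have [?|?] := lerP x m; have [?|?] := lerP y m; apply/andP; split; lra.
Qed.

Lemma clamp_bnd m x : 0 < m -> 0 <= clamp m x <= m.
Proof.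
move=> m0; rewrite clampE //.
have [?|?] := lerP x 0; have [?|?] := lerP x m; apply/andP; split; lra.
Qed.

Lemma lip_clamp C K d m x1 x2 : 0 < m -> lip C K d x1 x2 ->
  lip m K d (clamp m x1) (clamp m x2).
Proof.
move=> m0 [_ [_ h]]; split; [|split].
- by have /andP[? ?] := @clamp_bnd m x1 m0; rewrite ger0_norm.
- by have /andP[? ?] := @clamp_bnd m x2 m0; rewrite ger0_norm.
- exact: le_trans (@clamp_lip m x1 x2 m0) h.
Qed.

End Lip.
Section Int.
Variable R : realType.
Notation mu := (@lebesgue_measure R).

Lemma int_bound (f : R -> R) (a b k : R) : a <= b -> 0 <= k ->
  mu.-integrable `[a, b] (fun x => (f x)%:E) ->
  (forall x, a <= x <= b -> `|f x| <= k) ->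
  `|\int[mu]_(x in `[a, b]) f x| <= k * (b - a).
Proof.
move=> ab k0 fi fk.
apply: le_trans (le_normr_Rintegral _ _) _ => //.
rewrite /Rintegral.
have H : (\int[mu]_(x in `[a, b]) (`|f x|)%:E <= (k * (b - a))%:E)%E.
  apply: (@le_trans _ _ (\int[mu]_(x in `[a, b]) (cst k%:E) x)%E).
    have f0 : forall x, [set` `[a, b]] x -> (0 <= (`|f x|)%:E)%E by move=> x _; rewrite lee_fin.
    have mf1 : measurable_fun [set` `[a, b]] (fun x : R => @EFin R `|f x|).
      have /integrableP[mf _] := fi.
      by apply/measurable_EFinP; apply: measurableT_comp => //; apply/measurable_EFinP.
    have mf2 : measurable_fun [set` `[a, b]] (cst k%:E : R -> \bar R) by [].
    have := (ge0_le_integral mu (measurable_itv _) f0 mf1 mf2). apply.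
    move=> x; rewrite /= in_itv /= => /andP[? ?]; rewrite lee_fin; apply: fk.
    by apply/andP.
  rewrite integral_cst //= lebesgue_measure_itv /=.
  case: ifP => _; first by rewrite -EFinM lee_fin.
  by rewrite mule0 lee_fin; apply: mulr_ge0 => //; lra.
have fin : (\int[mu]_(x in `[a, b]) (`|f x|)%:E)%E \is a fin_num.
  rewrite ge0_fin_numE; last by apply: integral_ge0 => x _; rewrite lee_fin.
  by apply: le_lt_trans H _; rewrite ltry.
by rewrite -lee_fin fineK.
Qed.


Lemma itv_sub (T a b : R) : 0 <= a -> b <= T ->
  ([set` `[a, b]] : set R) `<=` [set` `[0, T]].
Proof.
move=> a0 bT x /=; rewrite !in_itv /= => /andP[h1 h2].
by apply/andP; split; lra.
Qed.

Lemma int_diff_bound (F1 F2 : R -> R) (T a b k : R) :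
  0 <= a -> a <= b -> b <= T -> 0 <= k ->
  mu.-integrable `[0, T] (fun x => (F1 x)%:E) ->
  mu.-integrable `[0, T] (fun x => (F2 x)%:E) ->
  (forall x, a <= x <= b -> `|F1 x - F2 x| <= k) ->
  `|\int[mu]_(x in `[a, b]) F1 x - \int[mu]_(x in `[a, b]) F2 x| <= k * T.
Proof.
move=> a0 ab bT k0 i1 i2 hk.
have j1 : mu.-integrable `[a, b] (EFin \o F1).
  by apply: integrableS i1 => //; exact: itv_sub.
have j2 : mu.-integrable `[a, b] (EFin \o F2).
  by apply: integrableS i2 => //; exact: itv_sub.
rewrite -RintegralB //.
apply: le_trans (@int_bound (fun x => F1 x - F2 x) a b k ab k0 _ hk) _.
  apply: eq_integrable (integrableB _ j1 j2) => // x _.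
by apply: ler_wpM2l => //; lra.
Qed.

Lemma int_le_total (f : R -> R) (T a b : R) :
  0 <= a -> a <= b -> b <= T ->
  mu.-integrable `[0, T] (fun x => (f x)%:E) ->
  `|\int[mu]_(x in `[a, b]) f x| <= \int[mu]_(x in `[0, T]) `|f x|.
Proof.
move=> a0 ab bT i1.
have j1 : mu.-integrable `[a, b] (EFin \o f).
  by apply: integrableS i1 => //; exact: itv_sub.
apply: le_trans (le_normr_Rintegral _ _) _ => //.
have n1 := integrable_norm i1.
have n2 := integrable_norm j1.
rewrite /Rintegral; apply: fine_le.
- exact: (integrable_fin_num _ n2).
- exact: (integrable_fin_num _ n1).
have mf1 : measurable_fun [set` `[0, T]] (fun x : R => @EFin R `|f x|).
  have /integrableP[mf _] := i1.
  by apply/measurable_EFinP; apply: measurableT_comp => //; apply/measurable_EFinP.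
apply: (ge0_subset_integral mu (measurable_itv _) (measurable_itv _) mf1).
  by move=> x _ /=; rewrite lee_fin.
exact: itv_sub.
Qed.

Lemma int_bound' (f : R -> R) (T a b k : R) :
  0 <= a -> a <= b -> b <= T -> 0 <= k ->
  mu.-integrable `[0, T] (fun x => (f x)%:E) ->
  (forall x, a <= x <= b -> `|f x| <= k) ->
  `|\int[mu]_(x in `[a, b]) f x| <= k * T.
Proof.
move=> a0 ab bT k0 i1 hk.
have j1 : mu.-integrable `[a, b] (fun x => (f x)%:E).
  by apply: integrableS i1 => //; exact: itv_sub.
apply: le_trans (@int_bound f a b k ab k0 j1 hk) _.
by apply: ler_wpM2l => //; lra.
Qed.

End Int.

Lemma sup_trick (R : realType) (X : R -> R) (T a B : R) : 0 <= T ->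
  (forall t, 0 <= t <= T -> X t <= B) ->
  (forall m, (forall t, 0 <= t <= T -> X t <= m) -> forall t, 0 <= t <= T -> X t <= a + m / 2) ->
  forall t, 0 <= t <= T -> X t <= 2 * a.
Proof.
move=> T0 hB hstep.
pose E := [set y | exists2 t, 0 <= t <= T & y = X t].
have hs : has_sup E.
  split; first by exists (X 0); exists 0 => //; apply/andP; split; lra.
  by exists B => y [t ht ->]; apply: hB.
have ub : forall t, 0 <= t <= T -> X t <= sup E.
  by move=> t ht; apply: sup_upper_bound => //; exists t.
have h2 := hstep _ ub.
have : sup E <= a + sup E / 2.
  apply: ge_sup; first by exists (X 0); exists 0 => //; apply/andP; split; lra.
  by move=> y [t ht ->]; apply: h2.
move=> hle t ht; have := ub t ht; lra.
Qed.

Section Lips.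
Variable R : realType.

Ltac lipt d0 := repeat first [ eassumption | apply: (lip_add) | apply: (lip_sub)
  | apply: (lip_mul d0) | apply: (lip_opp) | (apply: lip_cst; exact d0) ].

Lemma u1_lip (b u1max : R) : 0 < b -> 0 < u1max -> exists K : R, forall d ls1 ls2 s1 s2 : R,
  0 <= d -> lip 2 1 d ls1 ls2 -> lip 1 1 d s1 s2 ->
  lip u1max K d (u1_char b u1max ls1 s1) (u1_char b u1max ls2 s2).
Proof.
move=> hb hu; eexists => d ls1 ls2 s1 s2 d0 hl hs.
apply: (lip_clamp hu).
lipt d0.
Qed.

Lemma u2_lip (c u2max : R) : 0 < c -> 0 < u2max -> exists K : R, forall d ls1 ls2 s1 s2 r1 r2 : R,
  0 <= d -> lip 2 1 d ls1 ls2 -> lip 1 1 d s1 s2 -> lip 1 1 d r1 r2 ->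
  lip u2max K d (u2_char c u2max ls1 s1 r1) (u2_char c u2max ls2 s2 r2).
Proof.
move=> hb hu; eexists => d ls1 ls2 s1 s2 r1 r2 d0 hl hs hr.
apply: (lip_clamp hu).
lipt d0.
Qed.

Lemma rhs_s_lip (M U1 K1 U2 K2 : R) : exists C K : R, forall d beta u11 u12 u21 u22 s1 s2 r1 r2 : R,
  0 <= d -> lip M 0 d beta beta -> lip U1 K1 d u11 u12 -> lip U2 K2 d u21 u22 ->
  lip 1 1 d s1 s2 -> lip 1 1 d r1 r2 ->
  lip C K d (rhs_s beta u11 u21 s1 r1) (rhs_s beta u12 u22 s2 r2).
Proof.
eexists; eexists => d beta u11 u12 u21 u22 s1 s2 r1 r2 d0 hb h1 h2 hs hr.
rewrite /rhs_s; lipt d0.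
Qed.

Lemma rhs_r_lip (gamma : R) : exists C K : R, forall d s1 s2 r1 r2 : R,
  0 <= d -> lip 1 1 d s1 s2 -> lip 1 1 d r1 r2 ->
  lip C K d (rhs_r gamma s1 r1) (rhs_r gamma s2 r2).
Proof.
eexists; eexists => d s1 s2 r1 r2 d0 hs hr.
rewrite /rhs_r; lipt d0.
Qed.

Lemma rhs_ls_lip (gamma M U1 K1 U2 K2 : R) : exists C K : R,
  forall d beta u11 u12 u21 u22 s1 s2 r1 r2 l1 l2 m1 m2 : R,
  0 <= d -> lip M 0 d beta beta -> lip U1 K1 d u11 u12 -> lip U2 K2 d u21 u22 ->
  lip 1 1 d s1 s2 -> lip 1 1 d r1 r2 -> lip 2 1 d l1 l2 -> lip 2 1 d m1 m2 ->
  lip C K d (rhs_ls gamma beta u11 u21 s1 r1 l1 m1) (rhs_ls gamma beta u12 u22 s2 r2 l2 m2).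
Proof.
eexists; eexists => d beta u11 u12 u21 u22 s1 s2 r1 r2 l1 l2 m1 m2 d0 hb h1 h2 hs hr hl hm.
rewrite /rhs_ls; lipt d0.
Qed.

Lemma rhs_lr_lip (gamma M U2 K2 : R) : exists C K : R,
  forall d beta u21 u22 s1 s2 l1 l2 m1 m2 : R,
  0 <= d -> lip M 0 d beta beta -> lip U2 K2 d u21 u22 ->
  lip 1 1 d s1 s2 -> lip 2 1 d l1 l2 -> lip 2 1 d m1 m2 ->
  lip C K d (rhs_lr gamma beta u21 s1 l1 m1) (rhs_lr gamma beta u22 s2 l2 m2).
Proof.
eexists; eexists => d beta u21 u22 s1 s2 l1 l2 m1 m2 d0 hb h2 hs hl hm.
rewrite /rhs_lr; lipt d0.
Qed.

End Lips.

Section Core.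
Variable R : realType.
Notation mu := (@lebesgue_measure R).

Lemma adj_core (T K1 : R) (ls lr Fls Flr : R -> R) : 0 < T -> 0 <= K1 -> 2 * K1 * T <= 1/2 ->
  mu.-integrable `[0, T] (fun x => (Fls x)%:E) ->
  mu.-integrable `[0, T] (fun x => (Flr x)%:E) ->
  (forall x, 0 <= x <= T -> `|Fls x| <= K1 * (`|ls x| + `|lr x|)) ->
  (forall x, 0 <= x <= T -> `|Flr x| <= K1 * (`|ls x| + `|lr x|)) ->
  (forall t, 0 <= t <= T -> ls t = -1 - \int[mu]_(x in `[t, T]) Fls x /\
                            lr t = 0 - \int[mu]_(x in `[t, T]) Flr x) ->
  forall t, 0 <= t <= T -> `|ls t| + `|lr t| <= 2.
Proof.
move=> hT K0 hsm i1 i2 b1 b2 heq.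
have := @sup_trick R (fun t => `|ls t| + `|lr t|) T 1
  (1 + \int[mu]_(x in `[0,T]) `|Fls x| + \int[mu]_(x in `[0,T]) `|Flr x|).
rewrite mulr1; apply; first lra.
- move=> t ht; have [e1 e2] := heq t ht; rewrite e1 e2.
  have /andP[ht0 htT] := ht.
  have h1 := @int_le_total R Fls T t T ht0 htT (lexx T) i1.
  have h2 := @int_le_total R Flr T t T ht0 htT (lexx T) i2.
  have h3 := ler_normB (-1 : R) (\int[mu]_(x in `[t, T]) Fls x).
  have h4 := ler_normB (0 : R) (\int[mu]_(x in `[t, T]) Flr x).
  rewrite normrN normr1 normr0 in h3 h4.
  move: h1 h2 h3 h4.
  move: (\int[mu]_(x in `[t, T]) Fls x) (\int[mu]_(x in `[t, T]) Flr x)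
    (\int[mu]_(x in `[0, T]) `|Fls x|) (\int[mu]_(x in `[0, T]) `|Flr x|) => I1 I2 J1 J2.
  clear. move=> *; lra.
- move=> m hm t ht.
  have m0 : 0 <= m.
    have := hm 0; rewrite lexx /= => /(_ (ltW hT)).
    have := normr_ge0 (ls 0); have := normr_ge0 (lr 0); lra.
  have /andP[ht0 htT] := ht.
  have k0 : 0 <= K1 * m by apply: mulr_ge0.
  have hx : forall x, t <= x <= T -> 0 <= x <= T.
    by move=> x /andP[? ?]; apply/andP; split; lra.
  have h1 := @int_bound' R Fls T t T (K1 * m) ht0 htT (lexx T) k0 i1.
  have h2 := @int_bound' R Flr T t T (K1 * m) ht0 htT (lexx T) k0 i2.
  have /(_ _) h1' := h1.
  have : `|\int[mu]_(x in `[t, T]) Fls x| <= K1 * m * T.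
    apply: h1 => x hxx; apply: le_trans (b1 x (hx x hxx)) _.
    by apply: ler_wpM2l => //; apply: hm; apply: hx.
  have : `|\int[mu]_(x in `[t, T]) Flr x| <= K1 * m * T.
    apply: h2 => x hxx; apply: le_trans (b2 x (hx x hxx)) _.
    by apply: ler_wpM2l => //; apply: hm; apply: hx.
  have [e1 e2] := heq t ht; rewrite e1 e2.
  have h3 := ler_normB (-1 : R) (\int[mu]_(x in `[t, T]) Fls x).
  have h4 := ler_normB (0 : R) (\int[mu]_(x in `[t, T]) Flr x).
  rewrite normrN normr1 normr0 in h3 h4.
  move: h3 h4.
  move: (\int[mu]_(x in `[t, T]) Fls x) (\int[mu]_(x in `[t, T]) Flr x) => I1 I2.
  move=> h3 h4 h5 h6.
  have : K1 * m * T * 2 <= m / 2 by nra.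
  lra.
Qed.


Lemma diff_fwd (T L m t c : R) (x1 x2 F1 F2 : R -> R) :
  0 <= t <= T -> 0 <= L * m ->
  mu.-integrable `[0, T] (fun x => (F1 x)%:E) ->
  mu.-integrable `[0, T] (fun x => (F2 x)%:E) ->
  (forall x, 0 <= x <= T -> `|F1 x - F2 x| <= L * m) ->
  x1 t = c + \int[mu]_(x in `[0, t]) F1 x ->
  x2 t = c + \int[mu]_(x in `[0, t]) F2 x ->
  `|x1 t - x2 t| <= L * m * T.
Proof.
move=> /andP[ht0 htT] k0 i1 i2 hb e1 e2; rewrite e1 e2.
have -> : c + \int[mu]_(x in `[0, t]) F1 x - (c + \int[mu]_(x in `[0, t]) F2 x)
  = \int[mu]_(x in `[0, t]) F1 x - \int[mu]_(x in `[0, t]) F2 x by ring.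
apply: (int_diff_bound (lexx 0) ht0 htT k0 i1 i2) => x /andP[? ?].
by apply: hb; apply/andP; split; lra.
Qed.

Lemma diff_bwd (T L m t c : R) (x1 x2 F1 F2 : R -> R) :
  0 <= t <= T -> 0 <= L * m ->
  mu.-integrable `[0, T] (fun x => (F1 x)%:E) ->
  mu.-integrable `[0, T] (fun x => (F2 x)%:E) ->
  (forall x, 0 <= x <= T -> `|F1 x - F2 x| <= L * m) ->
  x1 t = c - \int[mu]_(x in `[t, T]) F1 x ->
  x2 t = c - \int[mu]_(x in `[t, T]) F2 x ->
  `|x1 t - x2 t| <= L * m * T.
Proof.
move=> /andP[ht0 htT] k0 i1 i2 hb e1 e2; rewrite e1 e2.
have -> : c - \int[mu]_(x in `[t, T]) F1 x - (c - \int[mu]_(x in `[t, T]) F2 x)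
  = - (\int[mu]_(x in `[t, T]) F1 x - \int[mu]_(x in `[t, T]) F2 x) by ring.
rewrite normrN.
apply: (int_diff_bound ht0 htT (lexx T) k0 i1 i2) => x /andP[? ?].
by apply: hb; apply/andP; split; lra.
Qed.

Lemma uniq_core (T L c0 c1 c2 c3 : R)
  (s1 s2 r1 r2 l1 l2 m1 m2 Fs1 Fs2 Fr1 Fr2 Fl1 Fl2 Fm1 Fm2 : R -> R) :
  0 < T -> 0 <= L -> 4 * L * T <= 1/2 ->
  mu.-integrable `[0, T] (fun x => (Fs1 x)%:E) ->
  mu.-integrable `[0, T] (fun x => (Fs2 x)%:E) ->
  mu.-integrable `[0, T] (fun x => (Fr1 x)%:E) ->
  mu.-integrable `[0, T] (fun x => (Fr2 x)%:E) ->
  mu.-integrable `[0, T] (fun x => (Fl1 x)%:E) ->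
  mu.-integrable `[0, T] (fun x => (Fl2 x)%:E) ->
  mu.-integrable `[0, T] (fun x => (Fm1 x)%:E) ->
  mu.-integrable `[0, T] (fun x => (Fm2 x)%:E) ->
  (forall t, 0 <= t <= T -> [/\ `|s1 t| <= 1, `|s2 t| <= 1, `|r1 t| <= 1 & `|r2 t| <= 1]) ->
  (forall t, 0 <= t <= T -> [/\ `|l1 t| <= 2, `|l2 t| <= 2, `|m1 t| <= 2 & `|m2 t| <= 2]) ->
  (forall x, 0 <= x <= T ->
     let D := `|s1 x - s2 x| + `|r1 x - r2 x| + `|l1 x - l2 x| + `|m1 x - m2 x| in
     [/\ `|Fs1 x - Fs2 x| <= L * D, `|Fr1 x - Fr2 x| <= L * D,
         `|Fl1 x - Fl2 x| <= L * D & `|Fm1 x - Fm2 x| <= L * D]) ->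
  (forall t, 0 <= t <= T ->
     [/\ s1 t = c0 + \int[mu]_(x in `[0, t]) Fs1 x, s2 t = c0 + \int[mu]_(x in `[0, t]) Fs2 x,
         r1 t = c1 + \int[mu]_(x in `[0, t]) Fr1 x & r2 t = c1 + \int[mu]_(x in `[0, t]) Fr2 x]) ->
  (forall t, 0 <= t <= T ->
     [/\ l1 t = c2 - \int[mu]_(x in `[t, T]) Fl1 x, l2 t = c2 - \int[mu]_(x in `[t, T]) Fl2 x,
         m1 t = c3 - \int[mu]_(x in `[t, T]) Fm1 x & m2 t = c3 - \int[mu]_(x in `[t, T]) Fm2 x]) ->
  forall t, 0 <= t <= T -> [/\ s1 t = s2 t, r1 t = r2 t, l1 t = l2 t & m1 t = m2 t].
Proof.
move=> hT L0 hsm is1 is2 ir1 ir2 il1 il2 im1 im2 bs bl hlip ef eb.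
pose D x := `|s1 x - s2 x| + `|r1 x - r2 x| + `|l1 x - l2 x| + `|m1 x - m2 x|.
have D0 : forall x, 0 <= D x.
  move=> x; rewrite /D.
  have := normr_ge0 (s1 x - s2 x); have := normr_ge0 (r1 x - r2 x).
  have := normr_ge0 (l1 x - l2 x); have := normr_ge0 (m1 x - m2 x); lra.
have := @sup_trick R D T 0 12.
rewrite mulr0 => hst.
have hD : forall t, 0 <= t <= T -> D t <= 0.
  apply: hst; first lra.
  - move=> t ht; have [? ? ? ?] := bs t ht; have [? ? ? ?] := bl t ht.
    have := ler_normB (s1 t) (s2 t); have := ler_normB (r1 t) (r2 t).
    have := ler_normB (l1 t) (l2 t); have := ler_normB (m1 t) (m2 t).
    rewrite /D; lra.
  - move=> m hm t ht.
    have m0 : 0 <= m by apply: le_trans (D0 0) (hm 0 _); apply/andP; split; lra.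
    have k0 : 0 <= L * m by apply: mulr_ge0.
    have hb : forall x, 0 <= x <= T -> [/\ `|Fs1 x - Fs2 x| <= L * m, `|Fr1 x - Fr2 x| <= L * m,
         `|Fl1 x - Fl2 x| <= L * m & `|Fm1 x - Fm2 x| <= L * m].
      move=> x hx; have [h1 h2 h3 h4] := hlip x hx.
      have h5 : L * D x <= L * m by apply: ler_wpM2l => //; apply: hm.
      by split; apply: le_trans h5.
    have [e1 e2 e3 e4] := ef t ht; have [e5 e6 e7 e8] := eb t ht.
    have q1 := diff_fwd ht k0 is1 is2 (fun x hx => let: And4 a _ _ _ := hb x hx in a) e1 e2.
    have q2 := diff_fwd ht k0 ir1 ir2 (fun x hx => let: And4 _ a _ _ := hb x hx in a) e3 e4.
    have q3 := diff_bwd ht k0 il1 il2 (fun x hx => let: And4 _ _ a _ := hb x hx in a) e5 e6.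
    have q4 := diff_bwd ht k0 im1 im2 (fun x hx => let: And4 _ _ _ a := hb x hx in a) e7 e8.
    have : 4 * (L * m * T) <= m / 2 by nra.
    rewrite /D; lra.
move=> t ht; have := hD t ht; have := D0 t; rewrite /D => h1 h2.
have := normr_ge0 (s1 t - s2 t); have := normr_ge0 (r1 t - r2 t).
have := normr_ge0 (l1 t - l2 t); have := normr_ge0 (m1 t - m2 t) => n1 n2 n3 n4.
have z : forall a b : R, `|a - b| = 0 -> a = b by move=> a b /eqP; rewrite normr_eq0 subr_eq0 => /eqP.
by split; apply: z; lra.
Qed.

End Core.

Section Bnd.
Variable R : realType.

Lemma rhs_ls_bnd (gamma beta u1 u2 s r ls lr M U1 U2 : R) : 0 < gamma ->
  0 <= beta <= M -> 0 <= u1 <= U1 -> 0 <= u2 <= U2 -> 0 <= s <= 1 -> 0 <= r <= 1 ->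
  `|rhs_ls gamma beta u1 u2 s r ls lr| <= (4 * M + U1 + 4 * U2 + gamma) * (`|ls| + `|lr|).
Proof.
move=> hg /andP[b0 bM] /andP[v0 v1] /andP[w0 w1] /andP[s0 s1] /andP[r0 r1].
pose A := beta * (1 - 2 * s - r) + u1 + u2 * (1 - 2 * s - r).
have hA : `|A| <= 4 * M + U1 + 4 * U2.
  rewrite ler_norml /A; apply/andP; split; nra.
have -> : rhs_ls gamma beta u1 u2 s r ls lr = ls * A + gamma * lr by rewrite /rhs_ls /A; ring.
apply: le_trans (ler_normD _ _) _; rewrite !normrM (gtr0_norm hg).
have := ler_wpM2l (normr_ge0 ls) hA.
have := normr_ge0 ls; have := normr_ge0 lr; have := normr_ge0 A.
nra.
Qed.

Lemma rhs_lr_bnd (gamma beta u2 s ls lr M U1 U2 : R) : 0 < gamma -> 0 <= U1 ->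
  0 <= beta <= M -> 0 <= u2 <= U2 -> 0 <= s <= 1 ->
  `|rhs_lr gamma beta u2 s ls lr| <= (4 * M + U1 + 4 * U2 + gamma) * (`|ls| + `|lr|).
Proof.
move=> hg hU /andP[b0 bM] /andP[w0 w1] /andP[s0 s1].
pose A := - beta * s + u2 * s.
have hA : `|A| <= 4 * M + U1 + 4 * U2.
  rewrite ler_norml /A; apply/andP; split; nra.
have -> : rhs_lr gamma beta u2 s ls lr = ls * A + gamma * lr by rewrite /rhs_lr /A; ring.
apply: le_trans (ler_normD _ _) _; rewrite !normrM (gtr0_norm hg).
have := ler_wpM2l (normr_ge0 ls) hA.
have := normr_ge0 ls; have := normr_ge0 lr; have := normr_ge0 A.
nra.
Qed.

Lemma adj_bound (gamma b c u1max u2max i0 M T : R) (beta s r ls lr : R -> R) :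
  0 < gamma -> 0 < u1max -> 0 < u2max -> (forall t, 0 <= beta t <= M) -> 0 < T ->
  2 * (4 * M + u1max + 4 * u2max + gamma) * T <= 1/2 ->
  optimality_system gamma b c u1max u2max i0 beta T s r ls lr ->
  forall t, 0 <= t <= T -> `|ls t| + `|lr t| <= 2.
Proof.
move=> hg hu1 hu2 hbeta hT hsm.
rewrite /optimality_system => -[hsr [i1 i2 i3 i4] heq].
have M0 : 0 <= M by have /andP[? ?] := hbeta 0; lra.
apply: (adj_core hT _ hsm i3 i4).
- lra.
- move=> x hx; have [h1 h2] := hsr x hx.
  apply: rhs_ls_bnd => //.
  + exact: (@clamp_bnd R u1max _ hu1).
  + exact: (@clamp_bnd R u2max _ hu2).
- move=> x hx; have [h1 h2] := hsr x hx.
  apply: rhs_lr_bnd => //; first lra.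
  exact: (@clamp_bnd R u2max _ hu2).
- by move=> t ht; have [_ _ e3 e4] := heq t ht.
Qed.

Lemma lip_var (C d a1 a2 : R) : `|a1| <= C -> `|a2| <= C -> `|a1 - a2| <= d -> lip C 1 d a1 a2.
Proof. by move=> h1 h2 h3; split; [|split]; rewrite ?mul1r. Qed.

Lemma lipK (C K d L a1 a2 : R) : lip C K d a1 a2 -> 0 <= d -> `|K| <= L -> `|a1 - a2| <= L * d.
Proof.
move=> [_ [_ h]] d0 hK; apply: le_trans h _.
apply: le_trans (_ : `|K| * d <= _); first by apply: ler_wpM2r => //; exact: ler_norm.
by apply: ler_wpM2r.
Qed.

Lemma small_T (T K1 L : R) : 0 < T -> 0 < K1 -> 0 <= L -> T < 1 / (4 * K1 + 8 * L + 1) ->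
  2 * K1 * T <= 1/2 /\ 4 * L * T <= 1/2.
Proof.
move=> hT hK hL hTT.
have hprod : T * (4 * K1 + 8 * L + 1) < 1 by rewrite -ltr_pdivlMr //; lra.
split; nra.
Qed.

End Bnd.
Unset Implicit Arguments.

Theorem theorem4 (R : realType) (gamma b c u1max u2max i0 : R) (beta : R -> R) :
  0 < gamma -> 0 < b -> 0 < c -> 0 < u1max -> 0 < u2max ->
  0 <= i0 <= 1 ->
  measurable_fun setT beta ->
  (forall t, 0 <= beta t) ->
  (exists M : R, forall t, beta t <= M) ->
  exists T0 : R, 0 < T0 /\
    forall T : R, 0 < T -> T < T0 ->
    forall s1 r1 ls1 lr1 s2 r2 ls2 lr2 : R -> R,
      optimality_system gamma b c u1max u2max i0 beta T s1 r1 ls1 lr1 ->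
      optimality_system gamma b c u1max u2max i0 beta T s2 r2 ls2 lr2 ->
      forall t, 0 <= t <= T ->
        [/\ s1 t = s2 t, r1 t = r2 t, ls1 t = ls2 t & lr1 t = lr2 t] /\
        u1_char b u1max (ls1 t) (s1 t) = u1_char b u1max (ls2 t) (s2 t) /\
            u2_char c u2max (ls1 t) (s1 t) (r1 t)
              = u2_char c u2max (ls2 t) (s2 t) (r2 t).
Proof.
move=> hg hb hc hu1 hu2 hi0 hbm hb0 [M hM].
have M0 : 0 <= M by have := hb0 0; have := hM 0; lra.
have hbeta : forall t, 0 <= beta t <= M by move=> t; rewrite hb0 hM.
have [Ku1 hu1l] := u1_lip hb hu1.
have [Ku2 hu2l] := u2_lip hc hu2.
have [Cs [Ks hsl]] := rhs_s_lip M u1max Ku1 u2max Ku2.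
have [Cr [Kr hrl]] := rhs_r_lip gamma.
have [Cl [Kl hll]] := rhs_ls_lip gamma M u1max Ku1 u2max Ku2.
have [Cm [Km hml]] := rhs_lr_lip gamma M u2max Ku2.
pose L := `|Ks| + `|Kr| + `|Kl| + `|Km|.
have L0 : 0 <= L.
  have := normr_ge0 Ks; have := normr_ge0 Kr; have := normr_ge0 Kl; have := normr_ge0 Km.
  rewrite /L; lra.
have K10 : 0 < 4 * M + u1max + 4 * u2max + gamma by lra.
exists (1 / (4 * (4 * M + u1max + 4 * u2max + gamma) + 8 * L + 1)); split.
  by apply: divr_gt0; lra.
move=> T hT hTT0 s1 r1 ls1 lr1 s2 r2 ls2 lr2 o1 o2.
have [sm1 sm2] := small_T hT K10 L0 hTT0.
have ab1 := adj_bound hg hu1 hu2 hbeta hT sm1 o1.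
have ab2 := adj_bound hg hu1 hu2 hbeta hT sm1 o2.
move: o1 o2; rewrite /optimality_system => -[hsr1 [is1 ir1 il1 im1] he1] -[hsr2 [is2 ir2 il2 im2] he2].
have E : forall t, 0 <= t <= T -> [/\ s1 t = s2 t, r1 t = r2 t, ls1 t = ls2 t & lr1 t = lr2 t].
  apply: (uniq_core hT L0 sm2 is1 is2 ir1 ir2 il1 il2 im1 im2).
  - move=> t ht; have [/andP[? ?] /andP[? ?]] := hsr1 t ht.
    have [/andP[? ?] /andP[? ?]] := hsr2 t ht.
    by split; rewrite ger0_norm.
  - move=> t ht; have := ab1 t ht; have := ab2 t ht.
    have := normr_ge0 (ls1 t); have := normr_ge0 (lr1 t).
    have := normr_ge0 (ls2 t); have := normr_ge0 (lr2 t).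
    move=> *; split; lra.
  - move=> x hx /=.
    have [/andP[? ?] /andP[? ?]] := hsr1 x hx.
    have [/andP[? ?] /andP[? ?]] := hsr2 x hx.
    have := ab1 x hx; have := ab2 x hx.
    have := normr_ge0 (ls1 x); have := normr_ge0 (lr1 x).
    have := normr_ge0 (ls2 x); have := normr_ge0 (lr2 x).
    have := normr_ge0 (s1 x - s2 x); have := normr_ge0 (r1 x - r2 x).
    have := normr_ge0 (ls1 x - ls2 x); have := normr_ge0 (lr1 x - lr2 x).
    move=> n1 n2 n3 n4 n5 n6 n7 n8 a2 a1.
    pose D := `|s1 x - s2 x| + `|r1 x - r2 x| + `|ls1 x - ls2 x| + `|lr1 x - lr2 x|.
    have d0 : 0 <= D by rewrite /D; lra.
    have hsx : lip 1 1 D (s1 x) (s2 x).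
      by apply: lip_var; [rewrite ger0_norm // | rewrite ger0_norm // | rewrite /D; lra].
    have hrx : lip 1 1 D (r1 x) (r2 x).
      by apply: lip_var; [rewrite ger0_norm // | rewrite ger0_norm // | rewrite /D; lra].
    have hlx : lip 2 1 D (ls1 x) (ls2 x) by apply: lip_var; rewrite /D; lra.
    have hmx : lip 2 1 D (lr1 x) (lr2 x) by apply: lip_var; rewrite /D; lra.
    have hbx : lip M 0 D (beta x) (beta x).
      have /andP[? ?] := hbeta x.
      by split; [|split]; rewrite ?subrr ?normr0 ?mul0r ?ger0_norm.
    have hu1x := hu1l D _ _ _ _ d0 hlx hsx.
    have hu2x := hu2l D _ _ _ _ _ _ d0 hlx hsx hrx.
    have q1 := hsl D _ _ _ _ _ _ _ _ _ d0 hbx hu1x hu2x hsx hrx.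
    have q2 := hrl D _ _ _ _ d0 hsx hrx.
    have q3 := hll D _ _ _ _ _ _ _ _ _ _ _ _ _ d0 hbx hu1x hu2x hsx hrx hlx hmx.
    have q4 := hml D _ _ _ _ _ _ _ _ _ d0 hbx hu2x hsx hlx hmx.
    have nK := (normr_ge0 Ks, normr_ge0 Kr, normr_ge0 Kl, normr_ge0 Km).
    case: nK => [[[k1 k2] k3] k4].
    split; [apply: (lipK q1 d0) | apply: (lipK q2 d0) | apply: (lipK q3 d0) | apply: (lipK q4 d0)];
      rewrite /L; lra.
  - move=> t ht; have [e1 e2 _ _] := he1 t ht; have [e3 e4 _ _] := he2 t ht.
    split; eassumption.
  - move=> t ht; have [_ _ e1 e2] := he1 t ht; have [_ _ e3 e4] := he2 t ht.
    split; eassumption.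
move=> t ht; have [-> -> -> ->] := E t ht.
by split.
Qed.
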